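(* Let $\Lambda_1$ be a finite irreducible graph with at least two vertices, and let $\Lambda_2$ and $\Gamma$ be finite simple graphs. Suppose that (1) there is an injective homomorphism $\psi\colon A(\Lambda_1*\Lambda_2)\hookrightarrow A(\Gamma)$ satisfying condition (KK), and (2) for $i=1,2$ there are full embeddings $\iota_i\colon\Lambda_i\to\Gamma$ with $\iota_i(V(\Lambda_i))\subset\mathrm{supp}(\psi_i)$, where $\psi_i$ is the restriction of $\psi$ to $A(\Lambda_i)$. Then the map $\iota\colon\Lambda_1*\Lambda_2\to\Gamma$ defined by $\iota(v)=\iota_1(v)$ for $v\in V(\Lambda_1)$ and $\iota(v)=\iota_2(v)$ for $v\in V(\Lambda_2)$ is a full embedding with $\iota(V(\Lambda_1*\Lambda_2))\subset\mathrm{supp}(\psi)$.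
   Context: All graphs are simple. $A(\Gamma) = \langle V(\Gamma) \mid uv=vu \text{ whenever } \{u,v\}\in E(\Gamma)\rangle$ is the right-angled Artin group. A graph embedding is an injective vertex map preserving adjacency; it is full if it also preserves non-adjacency. The join $\Lambda_1*\Lambda_2$ is obtained from the disjoint union by joining every vertex of $\Lambda_1$ to every vertex of $\Lambda_2$; $A(\Lambda_1*\Lambda_2)=A(\Lambda_1)\times A(\Lambda_2)$. A graph is irreducible if it is not the join of two non-empty graphs. The support $\mathrm{supp}(g)$ of $g\in A(\Gamma)$ is the set of vertices $v$ such that $v$ or $v^{-1}$ occurs in a (equivalently, any) shortest word representing $g$. For a homomorphism $\psi\colon A(\Lambda)\to A(\Gamma)$, $\mathrm{supp}(\psi)=\bigcup_{v\in V(\Lambda)}\mathrm{supp}(\psi(v))$. A homomorphism $\psi$ satisfies condition (KK) if for every $v\in V(\Lambda)$ the set $\mathrm{supp}(\psi(v))$ consists of mutually adjacent vertices of $\Gamma$. *)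

(* Defs.v *)
From mathcomp Require Import all_boot.
Set Implicit Arguments. Unset Strict Implicit. Unset Printing Implicit Defensive.

Definition simple_graph (V : finType) (e : rel V) : Prop :=
  symmetric e /\ irreflexive e.

Definition joinrel (V1 V2 : finType) (e1 : rel V1) (e2 : rel V2) : rel (V1 + V2) :=
  fun x y => match x, y with
  | inl a, inl b => e1 a b
  | inr a, inr b => e2 a b
  | _, _ => true
  end.

(* Irreducible: not the join of two non-empty graphs, i.e. there is no
   partition of the vertex set into two non-empty parts A, V\A with every
   vertex of A adjacent to every vertex of V\A. *)
Definition irreducible_graph (V : finType) (e : rel V) : Prop :=
  ~ exists A : {set V}, [/\ A != set0, ~: A != set0 &
      forall a b, a \in A -> b \notin A -> e a b].

Definition full_embedding (V W : finType) (e : rel V) (f : rel W) (i : V -> W) : Prop :=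
  injective i /\ forall u v, f (i u) (i v) = e u v.

(* Words in the generators of A(Gamma): letters (v, true) = v, (v, false) = v^-1. *)
Definition word (V : Type) := seq (V * bool).

(* The congruence on words defining A(Gamma) = <V | uv = vu for {u,v} in E>. *)
Inductive raag_eq (V : finType) (e : rel V) : word V -> word V -> Prop :=
| re_refl w : raag_eq e w w
| re_sym w1 w2 : raag_eq e w1 w2 -> raag_eq e w2 w1
| re_trans w1 w2 w3 : raag_eq e w1 w2 -> raag_eq e w2 w3 -> raag_eq e w1 w3
| re_cat w1 w2 w1' w2' : raag_eq e w1 w1' -> raag_eq e w2 w2' ->
    raag_eq e (w1 ++ w2) (w1' ++ w2')
| re_free x b : raag_eq e [:: (x, b); (x, ~~ b)] [::]
| re_comm u v : e u v -> raag_eq e [:: (u, true); (v, true)] [:: (v, true); (u, true)].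

Definition winv (V : Type) (w : word V) : word V :=
  rev (map (fun p => (p.1, ~~ p.2)) w).

Definition wsubst (V W : Type) (f : V -> word W) (w : word V) : word W :=
  flatten (map (fun p => if p.2 then f p.1 else winv (f p.1)) w).

(* f : V(Lambda) -> A(Gamma) (given by representative words) induces a
   homomorphism A(Lambda) -> A(Gamma). *)
Definition raag_hom (V W : finType) (e : rel V) (g : rel W) (f : V -> word W) : Prop :=
  forall u v, e u v ->
    raag_eq g (f u ++ f v) (f v ++ f u).

Definition raag_hom_inj (V W : finType) (e : rel V) (g : rel W) (f : V -> word W) : Prop :=
  forall w1 w2 : word V, raag_eq g (wsubst f w1) (wsubst f w2) -> raag_eq e w1 w2.

Definition supp (W : finType) (g : rel W) (w : word W) (v : W) : Prop :=
  exists w', [/\ raag_eq g w w',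
     (forall w'', raag_eq g w w'' -> size w' <= size w'') &
     v \in map fst w'].

Definition KK (V W : finType) (g : rel W) (f : V -> word W) : Prop :=
  forall v a b, supp g (f v) a -> supp g (f v) b -> a != b -> g a b.

(* Main.v *)
Require Import Defs.
From mathcomp Require Import all_boot.
From Stdlib Require Import ZArith Lia.
Set Implicit Arguments. Unset Strict Implicit. Unset Printing Implicit Defensive.

Section R.
Variable W : finType.
Variable g : rel W.
Notation req := (raag_eq g).

Lemma req_catl p w1 w2 : req w1 w2 -> req (p ++ w1) (p ++ w2).
Proof. by move=> h; apply: re_cat => //; apply: re_refl. Qed.
Lemma req_catr q w1 w2 : req w1 w2 -> req (w1 ++ q) (w2 ++ q).
Proof. by move=> h; apply: re_cat => //; apply: re_refl. Qed.

Definition P u s v t := req [:: (u,s); (v,t)] [:: (v,t); (u,s)].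

Lemma flip1 u s v t : P u s v t -> P u (~~s) v t.
Proof.
move=> H; rewrite /P.
apply: (@re_trans _ _ _ ([:: (u,~~s); (v,t)] ++ [:: (u,s); (u,~~s)])).
  rewrite -[X in req X _]cats0; apply: req_catl; apply: re_sym; apply: re_free.
apply: (@re_trans _ _ _ ([:: (u,~~s)] ++ [:: (u,s); (v,t)] ++ [:: (u,~~s)])).
  rewrite /=. apply: (req_catl [:: (u, ~~s)]).
  apply: (req_catr [:: (u, ~~s)] (re_sym H)).
change (req ([:: (u,~~s); (u,s)] ++ [:: (v,t); (u,~~s)]) ([::] ++ [:: (v,t); (u,~~s)])).
apply: req_catr.
have := re_free g u (~~s). by rewrite negbK.
Qed.

Lemma swapP u s v t : P u s v t -> P v t u s.
Proof. by move=> H; apply: re_sym. Qed.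

Lemma Pall u v s t : g u v -> P u s v t.
Proof.
move=> huv.
have TT : P u true v true by apply: re_comm.
case: s; case: t => //.
- by apply: swapP; apply: (flip1 (s:=true)); apply: swapP.
- by apply: (flip1 (s:=true)).
- apply: (flip1 (s:=true)).
  by apply: swapP; apply: (flip1 (s:=true)); apply: swapP.
Qed.

Lemma comm_past a s F : (forall y, y \in map fst F -> g a y) ->
  req ((a,s) :: F) (F ++ [:: (a,s)]).
Proof.
elim: F => [|[y t] F IH] H /=; first by apply: re_refl.
apply: (@re_trans _ _ _ ((y,t) :: (a,s) :: F)).
  apply: (req_catr F (Pall _ _ _)). by apply: H; rewrite inE eqxx.
apply: (req_catl [:: (y,t)]). apply: IH => z hz; apply: H; by rewrite inE hz orbT.
Qed.

Definition apow a (e : Z) : word W :=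
  match e with Z0 => [::] | Zpos p => nseq (Pos.to_nat p) (a,true)
  | Zneg p => nseq (Pos.to_nat p) (a,false) end.

Lemma apow_pos a n : apow a (Z.of_nat n) = nseq n (a,true).
Proof. case: n => [|n] //=. by rewrite SuccNat2Pos.id_succ. Qed.
Lemma apow_neg a n : apow a (- Z.of_nat n) = nseq n (a,false).
Proof. case: n => [|n] //=. by rewrite SuccNat2Pos.id_succ. Qed.

Definition sgn (s : bool) : Z := if s then 1%Z else (-1)%Z.

Lemma apow_cons a s e : req ((a,s) :: apow a e) (apow a (e + sgn s)).
Proof.
have [n [->|->]] : exists n, e = Z.of_nat n \/ e = (- Z.of_nat n)%Z.
  exists (Z.abs_nat e); lia.
- case: s => /=.
    rewrite (_ : (Z.of_nat n + 1 = Z.of_nat n.+1)%Z); last by lia.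
    rewrite !apow_pos; apply: re_refl.
  case: n => [|m].
    rewrite (_ : (Z.of_nat 0 + -1 = - Z.of_nat 1)%Z); last by lia.
    rewrite apow_pos apow_neg; apply: re_refl.
  rewrite (_ : (Z.of_nat m.+1 + -1 = Z.of_nat m)%Z); last by lia.
  rewrite !apow_pos /=.
  apply: (req_catr (nseq m (a,true)) (re_free g a false)).
- case: s => /=.
    case: n => [|m].
      rewrite (_ : (- Z.of_nat 0 + 1 = Z.of_nat 1)%Z); last by lia.
      rewrite apow_pos apow_neg; apply: re_refl.
    rewrite (_ : (- Z.of_nat m.+1 + 1 = - Z.of_nat m)%Z); last by lia.
    rewrite !apow_neg /=.
    apply: (req_catr (nseq m (a,false)) (re_free g a true)).
  rewrite (_ : (- Z.of_nat n + -1 = - Z.of_nat n.+1)%Z); last by lia.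
  rewrite !apow_neg; apply: re_refl.
Qed.

Definition expo a (w : word W) : Z :=
  foldr (fun l acc => ((if l.1 == a then sgn l.2 else 0) + acc)%Z) 0%Z w.

Lemma rearr a w : (forall y, y \in map fst w -> y != a -> g a y) ->
  req w (filter (fun l => l.1 != a) w ++ apow a (expo a w)).
Proof.
elim: w => [|[x s] w IH] H /=; first by apply: re_refl.
have IH' : req w (filter (fun l => l.1 != a) w ++ apow a (expo a w)).
  apply: IH => y hy; apply: H; by rewrite inE hy orbT.
case: (eqVneq x a) => [->|nx].
- rewrite /= ?eqxx /=.
  set F := filter _ w.
  have hF : forall y, y \in map fst F -> g a y.
    move=> y /mapP [l]; rewrite mem_filter => /andP [h1 h2] ->.
    apply: H => //; by rewrite inE (map_f fst h2) orbT.
  apply: (@re_trans _ _ _ ((a,s) :: F ++ apow a (expo a w))).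
    exact: (req_catl [:: (a,s)] IH').
  apply: (@re_trans _ _ _ ((F ++ [:: (a,s)]) ++ apow a (expo a w))).
    exact: (req_catr _ (comm_past s hF)).
  rewrite -catA /= Z.add_comm. apply: req_catl. exact: apow_cons.
- rewrite /= ?nx ?(negbTE nx) /=.
  exact: (req_catl [:: (x,s)] IH').
Qed.

Lemma short_expo w0 w1 a : req w0 w1 ->
  (forall w'', req w0 w'' -> size w1 <= size w'') -> a \in map fst w1 ->
  (forall y, y \in map fst w1 -> y != a -> g a y) -> expo a w1 <> 0%Z.
Proof.
move=> e m ain hyp E.
have r := rearr hyp.
rewrite E cats0 in r.
have := m _ (re_trans e r).
rewrite size_filter.
have : 0 < count (predC (fun l : W * bool => l.1 != a)) w1.
  rewrite -has_count; apply/hasP.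
  case/mapP: ain => l hl ->; exists l => //=; by rewrite negbK.
rewrite -(count_predC (fun l : W * bool => l.1 != a) w1).
move: (count _ _) (count _ _) => p q.
move=> h1 h2. by move: h2; rewrite -{2}(addn0 p) leq_add2l leqNgt h1.
Qed.


Record M2 := mk2 { m11 : Z; m12 : Z; m21 : Z; m22 : Z }.
Definition mul (x y : M2) : M2 :=
  mk2 (m11 x * m11 y + m12 x * m21 y)%Z (m11 x * m12 y + m12 x * m22 y)%Z
      (m21 x * m11 y + m22 x * m21 y)%Z (m21 x * m12 y + m22 x * m22 y)%Z.
Definition I2 := mk2 1 0 0 1.
Lemma mulA x y z : mul x (mul y z) = mul (mul x y) z.
Proof. case: x; case: y; case: z => *; rewrite /mul /I2; cbn [m11 m12 m21 m22]; f_equal; ring. Qed.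
Lemma mul1l x : mul I2 x = x.
Proof. case: x => *; rewrite /mul /I2; cbn [m11 m12 m21 m22]; f_equal; ring. Qed.
Lemma mul1r x : mul x I2 = x.
Proof. case: x => *; rewrite /mul /I2; cbn [m11 m12 m21 m22]; f_equal; ring. Qed.

Definition eval (lm : W * bool -> M2) (w : word W) :=
  foldr (fun l acc => mul (lm l) acc) I2 w.

Lemma eval_cat lm w1 w2 : eval lm (w1 ++ w2) = mul (eval lm w1) (eval lm w2).
Proof. elim: w1 => [|l w IH] /=; first by rewrite mul1l. by rewrite IH mulA. Qed.

Lemma eval_req lm :
  (forall x b, mul (lm (x,b)) (lm (x,~~b)) = I2) ->
  (forall u v, g u v -> mul (lm (u,true)) (lm (v,true)) = mul (lm (v,true)) (lm (u,true))) ->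
  forall w1 w2, req w1 w2 -> eval lm w1 = eval lm w2.
Proof.
move=> hf hc w1 w2; elim => //=.
- by move=> ? ? ? _ -> _ ->.
- by move=> ? ? ? ? _ h1 _ h2; rewrite !eval_cat h1 h2.
- by move=> x b; rewrite mul1r hf.
- by move=> u v huv; rewrite !mul1r hc.
Qed.

Definition Apow (e : Z) := mk2 1 (2 * e) 0 1.
Definition Bpow (e : Z) := mk2 1 0 (2 * e) 1.

Definition lm2 (a c : W) (l : W * bool) : M2 :=
  if l.1 == a then (if l.2 then Apow 1 else Apow (-1))
  else if l.1 == c then (if l.2 then Bpow 1 else Bpow (-1)) else I2.

Lemma evalA a c w : c \notin map fst w -> eval (lm2 a c) w = Apow (expo a w).
Proof.
elim: w => [|[x s] w IH] //= H.
rewrite inE negb_or in H; case/andP: H => H1 H2.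
rewrite IH // /lm2 /=.
case: eqP => [_|_].
  by case: s; rewrite /mul /Apow /sgn; cbn [m11 m12 m21 m22]; f_equal; ring.
by rewrite eq_sym (negbTE H1) mul1l.
Qed.

Lemma evalB a c w : a \notin map fst w -> eval (lm2 a c) w = Bpow (expo c w).
Proof.
elim: w => [|[x s] w IH] //= H.
rewrite inE negb_or in H; case/andP: H => H1 H2.
rewrite IH // /lm2 /= eq_sym (negbTE H1).
case: eqP => [_|_].
  by case: s; rewrite /mul /Bpow /sgn; cbn [m11 m12 m21 m22]; f_equal; ring.
by rewrite mul1l.
Qed.

Lemma NC (V : finType) (f : V -> word W) x y a c :
  symmetric g -> KK g f -> a != c -> ~~ g a c ->
  supp g (f x) a -> supp g (f y) c ->
  req (f x ++ f y) (f y ++ f x) -> False.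
Proof.
move=> sg kk nac ngac [w1 [r1 m1 i1]] [w2 [r2 m2 i2]] hc.
have sx z : z \in map fst w1 -> supp g (f x) z by move=> hz; exists w1.
have sy z : z \in map fst w2 -> supp g (f y) z by move=> hz; exists w2.
have e1 : expo a w1 <> 0%Z.
  apply: (short_expo r1 m1 i1) => z hz hza.
  apply: (kk x); [exact: sx | exact: sx | by rewrite eq_sym].
have e2 : expo c w2 <> 0%Z.
  apply: (short_expo r2 m2 i2) => z hz hza.
  apply: (kk y); [exact: sy | exact: sy | by rewrite eq_sym].
have c1 : c \notin map fst w1.
  apply/negP => hc1; move/negP: ngac; apply.
  apply: (kk x); [exact: sx | exact: sx | done].
have c2 : a \notin map fst w2.
  apply/negP => hc2; move/negP: ngac; apply; rewrite sg.
  apply: (kk y); [exact: sy | exact: sy | by rewrite eq_sym].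
have hl : forall x0 b, mul (lm2 a c (x0,b)) (lm2 a c (x0,~~b)) = I2.
  move=> x0 b; rewrite /lm2 /=; case: (x0 == a); last case: (x0 == c);
  by case: b; rewrite /mul /I2 /Apow /Bpow /=; f_equal.
have hcm : forall u v, g u v -> mul (lm2 a c (u,true)) (lm2 a c (v,true)) =
    mul (lm2 a c (v,true)) (lm2 a c (u,true)).
  move=> u v huv; rewrite /lm2 /=.
  case: (eqVneq u a) => [eua|nua].
    case: (eqVneq v a) => [eva|nva] //.
    case: (eqVneq v c) => [evc|nvc].
      by move: huv; rewrite evc eua (negbTE ngac).
    by rewrite mul1l mul1r.
  case: (eqVneq u c) => [euc|nuc].
    case: (eqVneq v a) => [eva|nva].
      by move: huv; rewrite eva euc sg (negbTE ngac).
    case: (eqVneq v c) => [evc|nvc] //.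
    by rewrite mul1l mul1r.
have := eval_req hl hcm hc.
rewrite !eval_cat (eval_req hl hcm r1) (eval_req hl hcm r2) evalA // evalB //.
move=> H.
have h : (1*1 + 2 * expo a w1 * (2 * expo c w2) = 1*1 + 0*0)%Z := f_equal m11 H.
have : (expo a w1 * expo c w2 = 0)%Z by lia.
by case/Z.mul_eq_0.
Qed.

End R.

Theorem lemma3p3 (V1 V2 W : finType) (e1 : rel V1) (e2 : rel V2) (g : rel W)
  (f : V1 + V2 -> word W) (i1 : V1 -> W) (i2 : V2 -> W) :
  simple_graph e1 -> simple_graph e2 -> simple_graph g ->
  irreducible_graph e1 -> 2 <= #|V1| ->
  raag_hom (joinrel e1 e2) g f ->
  raag_hom_inj (joinrel e1 e2) g f ->
  KK g f ->
  full_embedding e1 g i1 ->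
  (forall v, exists u, supp g (f (inl u)) (i1 v)) ->
  full_embedding e2 g i2 ->
  (forall v, exists u, supp g (f (inr u)) (i2 v)) ->
  full_embedding (joinrel e1 e2) g
      (fun x => match x with inl a => i1 a | inr b => i2 b end) /\
  (forall x, exists y, supp g (f y)
      (match x with inl a => i1 a | inr b => i2 b end)).
Proof.
move=> [s1 ir1] _ [sg irg] irr card hom _ kk [inj1 full1] sup1 [inj2 full2] sup2.
have nonnb : forall u, exists u2, u2 != u /\ ~~ e1 u u2.
  move=> u.
  case: (boolP [exists u2, (u2 != u) && ~~ e1 u u2]).
    by case/existsP => u2 /andP [h1 h2]; exists u2.
  rewrite negb_exists => /forallP H; exfalso; apply: irr.
  exists [set u]; split.
  - by apply/set0Pn; exists u; rewrite inE.
  - rewrite -card_gt0; move: (cardsC [set u]); rewrite cards1 => h.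
    by move: card; rewrite -h add1n ltnS.
  - move=> a b; rewrite inE => /eqP -> hb.
    have := H b; rewrite inE in hb; rewrite hb /=; by rewrite negbK.
have key : forall u v, i1 u != i2 v /\ g (i1 u) (i2 v).
  move=> u v.
  have [u' hu'] := sup1 u; have [v' hv'] := sup2 v.
  have ne : i1 u != i2 v.
    apply/negP => /eqP E.
    have [u2 [hne hnb]] := nonnb u.
    have [y hy] := sup1 u2.
    apply: (NC (x := inr v') (y := inl y) (a := i2 v) (c := i1 u2) sg kk).
    - rewrite -E; apply/negP => /eqP /inj1 h; by rewrite h eqxx in hne.
    - by rewrite -E full1.
    - exact: hv'.
    - exact: hy.
    - exact: hom.
  split => //.
  case: (boolP (g (i1 u) (i2 v))) => // ng; exfalso.
  apply: (NC (x := inl u') (y := inr v') (a := i1 u) (c := i2 v) sg kk ne ng hu' hv').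
  exact: hom.
split; last first.
  case=> [a|b]; [have [u h] := sup1 a; exists (inl u) | have [u h] := sup2 b; exists (inr u)]; exact: h.
split.
  case=> [a|b] [a'|b'] /=.
  - by move/inj1 ->.
  - by move=> E; move: (key a b'); rewrite E eqxx => [[]].
  - by move=> E; move: (key a' b); rewrite E eqxx => [[]].
  - by move/inj2 ->.
case=> [a|b] [a'|b'] /=.
- exact: full1.
- by case: (key a b').
- by rewrite sg; case: (key a' b).
- exact: full2.
Qed.
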